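(* Let $q$ be an odd prime power, $f$ a planar function on $\mathbb F_{q^2}$, and $\theta\in\mathbb F_{q^2}^*$ such that for every $c\in\mathbb F_q$, $\#\{x\in\mathbb F_{q^2}:\theta_1f_0(x)-\theta_0f_1(x)=c\}$ equals $q+1$ if $c\neq0$ and $1$ if $c=0$. Then the unital $\mathcal U_\theta:=\{(x,t\theta):x\in\mathbb F_{q^2},t\in\mathbb F_q\}\cup\{(\infty)\}$ of order $q$ in $\Pi(f)$ is self-dual.
   Context: A function $f:\mathbb F_{q^2}\to\mathbb F_{q^2}$ is planar if for every $a\neq0$ the map $x\mapsto f(x+a)-f(x)$ is a bijection. For planar $f$, $\Pi(f)$ is the projective plane with points $(x,y)\in\mathbb F_{q^2}^2$ and $(a)$ for $a\in\mathbb F_{q^2}\cup\{\infty\}$, and lines $L_{a,b}=\{(x,f(x+a)-b):x\in\mathbb F_{q^2}\}\cup\{(a)\}$, $N_a=\{(a,y):y\in\mathbb F_{q^2}\}\cup\{(\infty)\}$ ($a,b\in\mathbb F_{q^2}$), $L_\infty=\{(a):a\in\mathbb F_{q^2}\cup\{\infty\}\}$, incidence being membership. A fixed $\xi\in\mathbb F_{q^2}\setminus\mathbb F_q$ is chosen; $\theta=\theta_0+\theta_1\xi$ and $f(x)=f_0(x)+f_1(x)\xi$ with $\theta_i,f_i(x)\in\mathbb F_q$. A unital $\mathcal U$ embedded in a projective plane $\Pi$ of order $q^2$ (a set of $q^3+1$ points meeting each line in $1$ or $q+1$ points) is viewed as the $2$-$(q^3+1,q+1,1)$ design whose blocks are the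 intersections with lines meeting it in $q+1$ points. Its dual unital $\mathcal U^*$ is the design whose points are the tangent lines of $\mathcal U$ (lines meeting it in exactly one point) and whose blocks correspond to the points of $\Pi$ not in $\mathcal U$, a tangent line being incident with such a point if it contains it. $\mathcal U$ is self-dual if $\mathcal U$ and $\mathcal U^*$ are isomorphic as designs. *)

(* Defs.v *)
From HB Require Import structures.
From mathcomp Require Import all_boot all_order all_algebra all_field.
Set Implicit Arguments. Unset Strict Implicit. Unset Printing Implicit Defensive.
Import GRing.Theory.
Local Open Scope ring_scope.

(* F plays the role of F_{q^2}; its subfield F_q is {x | x^q = x}. *)
Definition subFq (F : finFieldType) (q : nat) : {set F} := [set x : F | x ^+ q == x].

(* Coordinates w.r.t. the basis {1, xi} of F_{q^2} over F_q:
   x = xicoord0 x + xicoord1 x * xi with xicoord0 x, xicoord1 x in F_q.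
   Explicitly, xicoord1 x = (x - x^q) / (xi - xi^q). *)
Definition xicoord1 (F : finFieldType) (q : nat) (xi x : F) : F :=
  (x - x ^+ q) / (xi - xi ^+ q).
Definition xicoord0 (F : finFieldType) (q : nat) (xi x : F) : F :=
  x - xicoord1 q xi x * xi.

Definition planar (F : finFieldType) (f : F -> F) : Prop :=
  forall a : F, a != 0 -> bijective (fun x => f (x + a) - f x).

(* Points of Pi(f): inl (x,y) is the affine point (x,y);
   inr (Some a) is (a), inr None is (infinity). *)
Definition ppoint (F : finFieldType) : finType := ((F * F) + option F)%type.
(* Lines: inl (a,b) is L_{a,b}; inr (inl a) is N_a; inr (inr tt) is L_infinity. *)
Definition pline (F : finFieldType) : finType := ((F * F) + (F + unit))%type.

Definition pinc (F : finFieldType) (f : F -> F) (P : ppoint F) (L : pline F) : bool :=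
  match L, P with
  | inl (a, b), inl (x, y) => y == f (x + a) - b
  | inl (a, b), inr (Some c) => c == a
  | inl _, inr None => false
  | inr (inl a), inl (x, y) => x == a
  | inr (inl a), inr None => true
  | inr (inl a), inr (Some _) => false
  | inr (inr _), inl _ => false
  | inr (inr _), inr _ => true
  end.

Definition meet (F : finFieldType) (f : F -> F) (U : {set ppoint F}) (L : pline F) : nat :=
  #|[set P in U | pinc f P L]|.

Definition is_unital (F : finFieldType) (f : F -> F) (q : nat) (U : {set ppoint F}) : Prop :=
  #|U| = (q ^ 3).+1 /\ forall L : pline F, meet f U L = 1%N \/ meet f U L = q.+1.

Definition upoint (F : finFieldType) (U : {set ppoint F}) : finType :=
  {P : ppoint F | P \in U}.
Definition ublock (F : finFieldType) (f : F -> F) (q : nat) (U : {set ppoint F}) : finType :=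
  {L : pline F | meet f U L == q.+1}.
Definition uinc (F : finFieldType) (f : F -> F) (q : nat) (U : {set ppoint F})
  (P : upoint U) (B : ublock f q U) : bool := pinc f (val P) (val B).

Definition dpoint (F : finFieldType) (f : F -> F) (U : {set ppoint F}) : finType :=
  {L : pline F | meet f U L == 1%N}.
Definition dblock (F : finFieldType) (U : {set ppoint F}) : finType :=
  {P : ppoint F | P \notin U}.
Definition dinc (F : finFieldType) (f : F -> F) (U : {set ppoint F})
  (L : dpoint f U) (B : dblock U) : bool := pinc f (val B) (val L).

Definition design_iso (P1 B1 P2 B2 : finType) (I1 : P1 -> B1 -> bool)
  (I2 : P2 -> B2 -> bool) : Prop :=
  exists (phi : P1 -> P2) (psi : B1 -> B2),
    [/\ bijective phi, bijective psi & forall p b, I1 p b = I2 (phi p) (psi b)].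

Definition self_dual (F : finFieldType) (f : F -> F) (q : nat) (U : {set ppoint F}) : Prop :=
  design_iso (@uinc F f q U) (@dinc F f U).

Definition Utheta (F : finFieldType) (q : nat) (theta : F) : {set ppoint F} :=
  inr None |: [set P : ppoint F |
     if P is inl (x, y) then [exists t in subFq F q, y == t * theta] else false].

(* Main.v *)
Require Import Defs.
From HB Require Import structures.
From mathcomp Require Import all_boot all_order all_algebra all_field.
From mathcomp Require Import ring zify.
Import GRing.Theory.
Local Open Scope ring_scope.

Theorem proposition3p4 (F : finFieldType) (q : nat) (xi theta : F) (f : F -> F) :
  (exists p k : nat, [/\ prime p, 0 < k & q = p ^ k]%N) ->
  odd q ->
  #|F| = (q ^ 2)%N ->
  xi ^+ q != xi ->
  planar f ->
  theta != 0 ->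
  (forall c : F, c \in subFq F q ->
     #|[set x : F | xicoord1 q xi theta * xicoord0 q xi (f x)
                    - xicoord0 q xi theta * xicoord1 q xi (f x) == c]|
     = (if c == 0 then 1%N else q.+1)) ->
  is_unital f q (Utheta q theta) /\ self_dual f q (Utheta q theta).
Proof.
move=> [p [k [pp k0 qE]]] oddq cardF xiq _ th0 hyp.
have pc : p \in [pchar F].
  by apply: (@card_finPcharP F p (k * 2)) => //; rewrite cardF qE expnM.
have qn : [pchar F].-nat q.
  by rewrite qE pnatX (eq_pnat _ (pcharf_eq pc)) pnat_id.
have frobD (x y : F) : (x + y) ^+ q = x ^+ q + y ^+ q by exact: exprDn_pchar.
have frobN (x : F) : (- x) ^+ q = - x ^+ q by exact: exprNn_pchar.
have frobB (x y : F) : (x - y) ^+ q = x ^+ q - y ^+ q by rewrite frobD frobN.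
have frob2 (x : F) : x ^+ q ^+ q = x by rewrite -exprM mulnn -cardF expf_card.
have q0 : (0 < q)%N by case: (q) oddq.
pose d := xi - xi ^+ q.
have d0 : d != 0 by rewrite subr_eq0 eq_sym.
pose K (y : F) := (theta * y ^+ q - theta ^+ q * y) / d.
have hK (y : F) : xicoord1 q xi theta * xicoord0 q xi y
                    - xicoord0 q xi theta * xicoord1 q xi y = K y.
  by rewrite /xicoord0 /xicoord1 /K -/d; ring.
have KS (y : F) : K y \in subFq F q.
  rewrite inE; apply/eqP; rewrite /K exprMn exprVn /d !frobB !exprMn !frob2.
  have d1 : xi ^+ q - xi != 0 by rewrite subr_eq0.
  by field; rewrite d1 -/d d0.
have KB (u v : F) : K (u - v) = K u - K v by rewrite /K frobB; ring.
have Kt (t : F) : t \in subFq F q -> K (t * theta) = 0.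
  rewrite inE => tS; rewrite /K exprMn (eqP tS).
  by rewrite [X in X / _](_ : _ = 0) ?mul0r //; ring.
have Ky (y : F) : K y = 0 -> y / theta \in subFq F q.
  move=> Ky0.
  have Ky' : theta * y ^+ q = theta ^+ q * y.
    apply/eqP; rewrite -subr_eq0; move: Ky0; rewrite /K.
    by move/eqP; rewrite mulf_eq0 invr_eq0 (negbTE d0) orbF.
  have thq : theta ^+ q != 0 by rewrite expf_neq0.
  rewrite inE exprMn exprVn; apply/eqP.
  have yq : y ^+ q = theta ^+ q * y / theta.
    by apply: (mulIf th0); rewrite divfK // mulrC Ky'.
  by rewrite yq; field; rewrite th0 thq.
set U := Utheta q theta.
have memU (x y : F) : (inl (x, y) \in U) = (K y == 0).
  rewrite /U /Utheta !inE /=; apply/idP/idP.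
    by case/existsP => t /andP[tS /eqP ->]; rewrite Kt.
  move=> /eqP Ky0; apply/existsP; exists (y / theta).
  by rewrite divfK // eqxx andbT Ky.
have Uinf : inr None \in U by rewrite /U /Utheta !inE.
have USome (a : F) : (inr (Some a) \in U) = false by rewrite /U /Utheta !inE.
have hyp' (c : F) : c \in subFq F q ->
    #|[set x | K (f x) == c]| = (if c == 0 then 1%N else q.+1).
  move=> cS; rewrite -(hyp c cS); apply: eq_card => x; by rewrite !inE hK.
set S := subFq F q.
have S0 : (0 : F) \in S by rewrite inE expr0n; case: (q) q0.
have cardS : #|S| = q.
  have e1 : (q ^ 2)%N = \sum_(c in S) #|[set x | K (f x) == c]|.
    rewrite -cardF -sum1_card (partition_big (fun x => K (f x)) (mem S)) /=;
      last by move=> x _; exact: KS.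
    by apply: eq_bigr => c _; rewrite sum1dep_card.
  rewrite (eq_bigr (fun c => if c == 0 then 1%N else q.+1)) in e1; last first.
    by move=> c cS; rewrite hyp'.
  rewrite (bigD1 0) //= eqxx in e1.
  rewrite (eq_bigr (fun _ => q.+1)) in e1; last by move=> c /andP[_ /negbTE ->].
  rewrite sum_nat_const in e1.
  rewrite (cardD1 0) S0.
  set e := #|_| in e1; set e' := #|_|.
  have ee : e = e' by apply: eq_card => c; rewrite inE /= andbC.
  rewrite -ee; clear -e1 q0; nia.
have Ucard : #|U| = (q ^ 3).+1.
  rewrite /U /Utheta cardsU1 inE /=.
  have -> : [set P : ppoint F | if P is inl (x, y)
                then [exists t in subFq F q, y == t * theta] else false] =
      [set (inl (u.1, u.2 * theta) : ppoint F) | u in setX [set: F] S].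
    apply/setP => -[[x y]|[a|]]; rewrite inE.
    - apply/existsP/imsetP.
        by case=> t /andP[tS /eqP ->]; exists (x, t); rewrite // in_setX in_setT tS.
      by case=> -[x' t]; rewrite in_setX in_setT /= => tS [_ ->]; exists t; rewrite tS eqxx.
    - by apply/esym/negbTE/imsetP => -[].
    - by apply/esym/negbTE/imsetP => -[].
  rewrite card_imset; last first.
    by move=> [x1 t1] [x2 t2] [] -> /(mulIf th0) ->.
  by rewrite cardsX cardsT cardF cardS -expnSr add1n.
clearbody U.
have meetI : meet f U (inr (inr tt)) = 1%N.
  rewrite /meet -(cards1 (inr None : ppoint F)); apply: eq_card => P; rewrite !inE.
  by case: P => [[x y]|[a|]] /=; rewrite ?USome ?Uinf ?andbF.
have meetN (a : F) : meet f U (inr (inl a)) = q.+1.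
  rewrite /meet.
  have -> : [set P in U | pinc f P (inr (inl a))] =
            inr None |: [set (inl (a, t * theta) : ppoint F) | t in S].
    apply/setP => P; rewrite !inE.
    case: P => [[x y]|[c|]] /=.
    - rewrite memU; apply/idP/idP.
        move=> /andP[Ky0 /eqP ->]; apply/imsetP; exists (y / theta).
          by apply: Ky; apply/eqP.
        by rewrite divfK.
      by case/imsetP => t tS [-> ->]; rewrite eqxx andbT Kt.
    - by rewrite USome /=; apply/esym/negbTE/imsetP => -[t _].
    - by rewrite Uinf.
  rewrite cardsU1 card_imset ?cardS; last first.
    by move=> t1 t2 [] /(mulIf th0).
  by rewrite (_ : (inr None \in _) = false) //; apply/negbTE/imsetP => -[t _].
have meetL (a b : F) : meet f U (inl (a, b)) = if K b == 0 then 1%N else q.+1.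
  rewrite /meet -hyp' //.
  rewrite -(card_imset (mem [set x | K (f x) == K b])
                       (f := fun x => (inl (x - a, f x - b) : ppoint F))); last first.
    by move=> x1 x2 [] /addIr.
  apply: eq_card => P; rewrite !inE.
  case: P => [[x y]|[c|]] /=.
  - rewrite memU; apply/idP/imsetP.
      move=> /andP[Ky1 /eqP ye]; exists (x + a); first by rewrite inE -subr_eq0 -KB -ye.
      by rewrite addrK ye.
    case=> z; rewrite inE => /eqP Kz [-> ->].
    by rewrite subrK eqxx andbT KB Kz subrr.
  - by rewrite USome /=; apply/esym/negbTE/imsetP => -[t _].
  - by rewrite andbF; apply/esym/negbTE/imsetP => -[t _].
have q1 : (q.+1 == 1%N) = false by case: (q) q0.
split.
  split=> // -[[a b]|[a|[]]]; rewrite ?meetL ?meetN ?meetI; auto.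
  by case: ifP; auto.
pose hP (P : ppoint F) : pline F :=
  match P with inl xy => inl xy | inr None => inr (inr tt) | inr (Some a) => inr (inl a) end.
pose hL (L : pline F) : ppoint F :=
  match L with inl ab => inl ab | inr (inl a) => inr (Some a) | inr (inr _) => inr None end.
have hPK : cancel hP hL by case=> [?|[?|]].
have hLK : cancel hL hP by case=> [?|[?|[]]].
have meetP (P : ppoint F) : meet f U (hP P) = if P \in U then 1%N else q.+1.
  case: P => [[x y]|[a|]] /=; rewrite ?meetL ?meetN ?meetI ?memU ?USome ?Uinf //.
have incP (P : ppoint F) (L : pline F) : pinc f P L = pinc f (hL L) (hP P).
  case: L => [[a b]|[a|[]]]; case: P => [[x y]|[c|]] //=; try exact: eq_sym.
  by rewrite (addrC a x); apply/eqP/eqP => ->; rewrite subKr.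
have pr1 (u : upoint U) : meet f U (hP (val u)) == 1%N by rewrite meetP (valP u).
have pr2 (l : dpoint f U) : hL (val l) \in U.
  have := valP l; rewrite -{1}(hLK (val l)) meetP.
  by case: ifP => // _; rewrite q1.
have pr3 (b : ublock f q U) : hL (val b) \notin U.
  have := valP b; rewrite -{1}(hLK (val b)) meetP.
  by case: ifP => // _; rewrite eq_sym q1.
have pr4 (c : dblock U) : meet f U (hP (val c)) == q.+1.
  by rewrite meetP (negbTE (valP c)).
pose phi (u : upoint U) : dpoint f U := Sub (hP (val u)) (pr1 u).
pose phii (l : dpoint f U) : upoint U := Sub (hL (val l)) (pr2 l).
pose psi (b : ublock f q U) : dblock U := Sub (hL (val b)) (pr3 b).
pose psii (c : dblock U) : ublock f q U := Sub (hP (val c)) (pr4 c).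
exists phi, psi; split.
- by exists phii => u; apply: val_inj => /=; rewrite ?hPK ?hLK.
- by exists psii => u; apply: val_inj => /=; rewrite ?hPK ?hLK.
- by move=> u b; rewrite /uinc /dinc /= incP.
Qed.
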